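(* Let $\mathcal L$ be a finite distributive lattice and $i$ an integer, and let $\mathcal L_{i,i}=\{p\in\mathcal L:\operatorname{rank}p=i\}$. If $|\mathcal L_{i,i}|>1$, then the ideal $H_{\mathcal L_{i,i}}$ has no linear resolution.
   Context: A finite distributive lattice is graded, with rank function $\operatorname{rank}$ ($0$ at the minimum, increasing by $1$ along cover relations). Let $P$ be the set of join-irreducible elements of $\mathcal L$ (elements with exactly one lower neighbor); for $p\in\mathcal L$ put $\ell(p)=\{q\in P:q\le p\}$. Let $K$ be a field, $S=K[x_p,y_p:p\in P]$ with all variables of degree 1, $u_q=\prod_{p\in\ell(q)}x_p\prod_{p\in P\setminus\ell(q)}y_p$, and for $\mathcal S\subseteq\mathcal L$ let $H_{\mathcal S}=(u_q:q\in\mathcal S)$. A graded ideal has a linear resolution if all minimal generators have a common degree $d$ and the $i$-th module of its graded minimal free resolution is generated in degree $d+i$. *)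

(* Defs.v *)
From HB Require Import structures.
From mathcomp Require Import all_boot all_order all_algebra.
From mathcomp Require Import mpoly.
Set Implicit Arguments. Unset Strict Implicit. Unset Printing Implicit Defensive.
Import Order.TTheory GRing.Theory.
Local Open Scope order_scope.

Section Lattice.
Context {disp : Order.disp_t} {L : finTBDistrLatticeType disp}.

Definition covers (x y : L) : bool :=
  (x < y) && [forall z : L, ~~ ((x < z) && (z < y))].

Definition is_chain (C : {set L}) : bool :=
  [forall x in C, forall y in C, (x <= y) || (y <= x)].

(* rank p = length of a longest chain from the minimum \bot to p
   (in a graded poset this is the rank function: 0 at \bot, +1 along covers) *)
Definition rank (p : L) : nat :=
  (\max_(C : {set L} | is_chain C && (C \subset [set z : L | (\bot <= z) && (z <= p)]))
      #|C|).-1.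

Definition jirr : {set L} := [set p : L | #|[set q : L | covers q p]| == 1%N].

Definition ell (p : L) : {set L} := [set q in jirr | q <= p].

Definition rank_level (i : int) : {set L} := [set p : L | (Posz (rank p)) == i].

End Lattice.

Section Ring.
Context {disp : Order.disp_t} (L : finTBDistrLatticeType disp).

Definition PT : finType := {p : L | p \in (jirr : {set L})}.

(* variables are indexed by PT + PT : inl p ~ x_p, inr p ~ y_p *)
Definition nvars : nat := #|{: (PT + PT)%type}|.

Definition Sring (K : fieldType) := {mpoly K[nvars]}.

Definition xvar (K : fieldType) (p : PT) : {mpoly K[nvars]} :=
  'X_(enum_rank (inl p : (PT + PT)%type)).
Definition yvar (K : fieldType) (p : PT) : {mpoly K[nvars]} :=
  'X_(enum_rank (inr p : (PT + PT)%type)).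

Definition u_mon (K : fieldType) (q : L) : {mpoly K[nvars]} :=
  (\prod_(p : PT | val p \in ell q) xvar K p *
   \prod_(p : PT | val p \notin ell q) yvar K p)%R.

Definition H_ideal (K : fieldType) (Sset : {set L}) : {mpoly K[nvars]} -> Prop :=
  fun f => exists c : L -> {mpoly K[nvars]}, f = (\sum_(q in Sset) c q * u_mon K q)%R.

End Ring.

(* homogeneous of degree d (the zero polynomial is homogeneous of every degree) *)
Definition homog_deg {n : nat} {K : fieldType} (d : nat) (f : {mpoly K[n]}) : bool :=
  all (fun m : 'X_{1..n} => mdeg m == d) (msupp f).

(* A graded ideal I of S = K[X_0..X_{n-1}] has a linear resolution:
   there is a graded free resolution
        ... -> F_2 --A 1--> F_1 --A 0--> F_0 --g--> I -> 0
   with F_i = S(-d-i)^(b i) (basis of F_i in degree d+i, maps of degree 0):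
   elements of F_i are row vectors of length b i, F_{i+1} -> F_i is v |-> v *m A i
   with all entries of A i homogeneous linear forms (degree 1), and F_0 -> I is
   v |-> v *m g with all entries of g homogeneous of degree d. Such a resolution
   is automatically minimal (all maps have entries in the maximal ideal), so it is
   the graded minimal free resolution; conversely a linear minimal resolution is one. *)
Definition has_linear_resolution {n : nat} {K : fieldType}
    (I : {mpoly K[n]} -> Prop) : Prop :=
  exists (d : nat) (b : nat -> nat) (g : 'cV[{mpoly K[n]}]_(b 0%N))
         (A : forall i : nat, 'M[{mpoly K[n]}]_(b i.+1, b i)),
    [/\ (forall j, homog_deg d (g j ord0)),
        (forall i j k, homog_deg 1 (A i j k)),
        (forall f, I f <-> exists v : 'rV_(b 0%N), f = (v *m g) ord0 ord0),
        (forall v : 'rV_(b 0%N), v *m g = 0 <-> exists w, v = w *m A 0%N)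
      & (forall i (v : 'rV_(b i.+1)), v *m A i = 0 <-> exists w, v = w *m A i.+1)]%R.

Arguments H_ideal {disp} L K Sset _.
Arguments u_mon {disp} L K q.

(* Main.v *)
Require Import Defs.
From HB Require Import structures.
From mathcomp Require Import all_boot all_order all_algebra.
From mathcomp Require Import mpoly.
From mathcomp Require Import zify.

Section LatSec.
Set Implicit Arguments. Unset Strict Implicit. Unset Printing Implicit Defensive.
Import Order.TTheory.
Local Open Scope order_scope.
Section Lat.
Context {disp : Order.disp_t} {L : finTBDistrLatticeType disp}.
Implicit Types p q x c : L.

Definition dn (z : L) := #|[set y : L | y <= z]|.

Lemma dn_lt x p : x < p -> (dn x < dn p)%N.
Proof.
move=> xp; apply: proper_card; apply/properP; split.
  apply/subsetP=> y; rewrite !inE => yx; exact: le_trans yx (ltW xp).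
by exists p; rewrite !inE ?lexx // lt_geF.
Qed.

Lemma cover_exists x p : x < p -> exists c, (x <= c) && covers c p.
Proof.
move=> xp.
pose S := [pred z : L | (x <= z) && (z < p)].
have Sx : S x by rewrite /S /= lexx xp.
case: (arg_maxnP dn Sx) => z /andP[xz zp] zmax.
exists z; rewrite xz /covers zp /=; apply/forallP=> z'; apply/negP=> /andP[zz' z'p].
have := zmax z'; rewrite /S /= (le_trans xz (ltW zz')) z'p => /(_ isT).
by rewrite leqNgt dn_lt.
Qed.

Lemma le_of_jirr p q :
  (forall r, r \in (jirr : {set L}) -> r <= p -> r <= q) -> p <= q.
Proof.
move: {2}(dn p) (leqnn (dn p)) => n; elim: n p => [|n IH] p.
  rewrite leqn0 => /eqP/cards0_eq/setP/(_ p); by rewrite !inE lexx.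
move=> dnp H.
have [pj|pnj] := boolP (p \in (jirr : {set L})); first exact: H.
have [->|pn0] := eqVneq p \bot; first by rewrite le0x.
have bp : \bot < p by rewrite lt0x.
have [c1 /andP[_ c1p]] := cover_exists bp.
have : #|[set z : L | covers z p]| != 1%N by move: pnj; rewrite inE.
have : c1 \in [set z : L | covers z p] by rewrite inE.
move=> c1in; rewrite (cardsD1 c1) c1in add1n eqSS -lt0n => /card_gt0P [c2].
rewrite !inE => /andP[c2c1 c2p].
have IHc c : covers c p -> c <= q.
  move=> /andP[cp _]; apply: IH.
    by rewrite -ltnS; apply: leq_trans dnp; apply: dn_lt.
  move=> r rj rc; apply: H rj (le_trans rc (ltW cp)).
have c1lt : c1 < p by case/andP: c1p.
have c2lt : c2 < p by case/andP: c2p.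
have hle : c1 `|` c2 <= p by rewrite leUx (ltW c1lt) (ltW c2lt).
have [<-|hne] := eqVneq (c1 `|` c2) p; first by rewrite leUx !IHc.
exfalso.
have hlt : c1 `|` c2 < p by rewrite lt_neqAle hne hle.
move: (c1p) => /andP[_ /forallP/(_ (c1 `|` c2))].
rewrite hlt andbT lt_neqAle leUl andbT negbK => /eqP hj.
have c21 : c2 <= c1 by rewrite hj leUr.
move: (c2p) => /andP[_ /forallP/(_ c1)].
by rewrite lt_neqAle c2c1 c21 c1lt.
Qed.

Lemma rank_lt p q : p < q -> (rank p < rank q)%N.
Proof.
move=> pq; rewrite /rank.
set Mp := (\max_(C | _) _)%N.
set Mq := (\max_(C | _) _)%N.
have Mp1 : (1 <= Mp)%N.
  rewrite /Mp; apply: (@bigop.bigmax_sup _ [set \bot] (fun C : {set L} => is_chain C && (C \subset [set z : L | (\bot <= z) && (z <= p)])) 1 (fun C => #|C|)); last by rewrite cards1.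
  apply/andP; split.
    by apply/forallP=> x; apply/implyP=> /set1P->; apply/forallP=> y; apply/implyP=> /set1P->; rewrite lexx.
  by apply/subsetP=> x /set1P->; rewrite inE lexx le0x.
have : (Mp <= Mq.-1)%N.
  apply/bigmax_leqP => C /andP[ch sub].
  have Cp : forall x, x \in C -> x <= p.
    by move=> x /(subsetP sub); rewrite inE => /andP[].
  have qC : q \notin C by apply/negP=> /Cp; rewrite lt_geF.
  have : (#|q |: C| <= Mq)%N.
    apply: leq_bigmax_cond; apply/andP; split.
      apply/forallP=> x; apply/implyP=> /setU1P hx; apply/forallP=> y; apply/implyP=> /setU1P hy.
      case: hx => [->|xC]; case: hy => [->|yC].
      - by rewrite lexx.
      - by rewrite (le_trans (Cp y yC) (ltW pq)) orbT.
      - by rewrite (le_trans (Cp x xC) (ltW pq)).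
      - by move/forallP: ch => /(_ x); rewrite xC /= => /forallP/(_ y); rewrite yC.
    apply/subsetP=> x /setU1P [->|xC]; rewrite inE le0x //=.
    exact: le_trans (Cp x xC) (ltW pq).
  rewrite cardsU1 qC add1n; lia.
lia.
Qed.
End Lat.

End LatSec.

Section MonSec.
Import Order.TTheory GRing.Theory.
Local Open Scope ring_scope.
Section Mon.
Context {disp : Order.disp_t} {L : finTBDistrLatticeType disp}.
Local Notation T := (PT L + PT L)%type.
Local Notation n := (nvars L).

Definition chi (q : L) (z : T) : bool :=
  match z with inl r => val r \in ell q | inr r => val r \notin ell q end.

Definition mq (q : L) : 'X_{1..n} := [multinom (chi q (enum_val i) : nat) | i < n].

Lemma u_monE (K : fieldType) q : u_mon L K q = 'X_[mq q].
Proof.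
rewrite mpolyXE_id.
rewrite (eq_bigr (fun i : 'I_n => 'X_(enum_rank (enum_val i)) ^+ chi q (enum_val i))); last first.
  by move=> i _; rewrite enum_valK mnmE.
rewrite -(big_enum_val (fun z : T => 'X_(enum_rank z) ^+ chi q z)).
rewrite big_sumType /u_mon /xvar /yvar /=.
rewrite [X in X * _ = _]big_mkcond [X in _ * X = _]big_mkcond /=.
by congr (_ * _); apply: eq_bigr => r _; case: ifP; rewrite ?expr1 ?expr0.
Qed.

Lemma mqE q (z : T) : mq q (enum_rank z) = chi q z.
Proof. by rewrite mnmE enum_rankK. Qed.

Lemma mdeg_mq q : mdeg (mq q) = #|{: PT L}|.
Proof.
rewrite mdegE.
rewrite (eq_bigr (fun i : 'I_n => (chi q (enum_val i) : nat))); last by move=> i _; rewrite mnmE.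
rewrite -(big_enum_val (fun z : T => (chi q z : nat))) /= big_sumType /=.
rewrite -big_split /= -sum1_card; apply: eq_bigr => r _; by case: (_ \in _).
Qed.

Lemma mq_comp p q (f g : 'X_{1..n}) : (mq q + f = mq p + g)%MM -> (mdeg f <= 1)%N ->
  (forall r, r \in ell p -> r \in ell q) \/ (forall r, r \in ell q -> r \in ell p).
Proof.
move=> E df.
have ellj : forall x r, r \in ell x -> r \in (jirr : {set L}) by move=> x r; rewrite inE => /andP[].
case: (pickP [pred r : PT L | (val r \in ell p) && (val r \notin ell q)]) => [r1 /andP[h1 h2] | none1]; last first.
  left=> r rp; have rj := ellj _ _ rp.
  by move: (none1 (exist _ r rj)) => /=; rewrite rp /= => /negbFE.
case: (pickP [pred r : PT L | (val r \in ell q) && (val r \notin ell p)]) => [r2 /andP[h3 h4] | none2]; last first.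
  right=> r rq; have rj := ellj _ _ rq.
  by move: (none2 (exist _ r rj)) => /=; rewrite rq /= => /negbFE.
exfalso.
pose i1 := enum_rank (inl r1 : T); pose i2 := enum_rank (inr r2 : T).
have e1 := congr1 (fun m : 'X_{1..n} => m i1) E.
have e2 := congr1 (fun m : 'X_{1..n} => m i2) E.
move: e1 e2 => /=; rewrite !mnmDE !mqE /= h1 (negbTE h2) h3 (negbTE h4) /= => e1 e2.
have f1 : (1 <= f i1)%N by lia.
have f2 : (1 <= f i2)%N by lia.
have i12 : i1 != i2 by apply/negP=> /eqP /enum_rank_inj.
move: df; rewrite mdegE (bigD1 i1) //= (bigD1 i2) /=; [lia|by rewrite eq_sym].
Qed.
End Mon.

Section Uniq.
Context {disp : Order.disp_t} {L : finTBDistrLatticeType disp}.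
Local Notation n := (nvars L).

Lemma level_uniq (i : int) (p q : L) (m : 'X_{1..n}) :
  p \in rank_level i -> q \in rank_level i ->
  (mq q <= mq p + m)%MM -> (mdeg m <= 1)%N -> p = q.
Proof.
rewrite !inE => /eqP rp /eqP rq le dm.
have E : (mq q + (mq p + m - mq q) = mq p + m)%MM by rewrite addmC submK.
have df : (mdeg (mq p + m - mq q) <= 1)%N.
  move: (congr1 mdeg E); rewrite !mdegD !mdeg_mq; lia.
have rpq : rank p = rank q by move: rp; rewrite -rq => -[].
have ellj : forall x r, r \in ell x -> r \in (jirr : {set L}) by move=> x r; rewrite inE => /andP[].
have sub : forall x y : L, (forall r, r \in ell x -> r \in ell y) -> (x <= y)%O.
  move=> x y H; apply: le_of_jirr => r rj rx.
  by move: (H r); rewrite [r \in ell x]inE [r \in ell y]inE rj rx /= => /(_ isT).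
have nlt : forall x y : L, rank x = rank y -> (x <= y)%O -> x = y.
  move=> x y rxy xy; apply/eqP; rewrite eq_le xy /=.
  case: (boolP (y <= x)%O) => // nyx; exfalso.
  have : (x < y)%O by rewrite lt_def xy andbT; apply/eqP=> e; move: nyx; rewrite e lexx.
  move/rank_lt; rewrite rxy; lia.
case: (mq_comp E df) => H.
  exact: nlt (sub _ _ H).
by apply/esym; apply: nlt (sub _ _ H).
Qed.
End Uniq.
End MonSec.

Section Alg.
Import GRing.Theory.
Local Open Scope ring_scope.
Context {n : nat} {K : fieldType}.
Implicit Types (c f h : {mpoly K[n]}) (m M : 'X_{1..n}).

Lemma lepm_addr m k : (m <= m + k)%MM.
Proof. by apply/mnm_lepP => i; rewrite mnmDE leq_addr. Qed.

Lemma mdeg_le m1 m2 : (m1 <= m2)%MM -> (mdeg m1 <= mdeg m2)%N.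
Proof. by move=> h; rewrite -(submK h) mdegD leq_addl. Qed.

Lemma coefMX c m M :
  (c * 'X_[m])@_M = if (m <= M)%MM then c@_(M - m) else 0.
Proof.
case: ifP => h.
  by rewrite -{1}(submK h) addmC mcoeffMX.
apply/eqP; apply: contraFT h => nz.
have : M \in msupp (c * 'X_[m]) by rewrite mcoeff_msupp.
rewrite (perm_mem (msuppMX c m)) => /mapP [k _ ->]; exact: lepm_addr.
Qed.

Lemma coefCX (a : K) m M : (a%:MP * 'X_[m])@_M = a * (m == M)%:R.
Proof. by rewrite mcoeffCM mcoeffX. Qed.

Lemma homog0 d f m : homog_deg d f -> mdeg m != d -> f@_m = 0.
Proof.
move=> hf hm; apply/eqP; apply: contraNT hm => nz.
have : m \in msupp f by rewrite mcoeff_msupp.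
by move/(allP hf).
Qed.

Lemma coefM_nz f h M : (f * h)@_M != 0 ->
  exists k1 k2, [/\ M = (k1 + k2)%MM, f@_k1 != 0 & h@_k2 != 0].
Proof.
rewrite mcoeffM.
case: (pickP [pred k : 'X_{1..n < (mdeg M).+1, (mdeg M).+1} |
    (M == (k.1 + k.2)%MM) && (f@_k.1 * h@_k.2 != 0)]) => [k /andP[/eqP E nz] | none].
  move=> _; exists k.1, k.2; split => //.
    by apply: contraNneq nz => ->; rewrite mul0r.
  by apply: contraNneq nz => ->; rewrite mulr0.
by rewrite big1 ?eqxx // => k hk; have := none k; rewrite /= hk /= => /negbFE/eqP.
Qed.

Lemma coefsum_nz (I : finType) (P : pred I) (F : I -> {mpoly K[n]}) M :
  (\sum_(x | P x) F x)@_M != 0 -> exists x, P x /\ (F x)@_M != 0.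
Proof.
rewrite raddf_sum.
case: (pickP [pred x | P x && ((F x)@_M != 0)]) => [x /andP[]|none]; first by exists x.
by rewrite big1 ?eqxx // => x px; have := none x; rewrite /= px /= => /negbFE/eqP.
Qed.
End Alg.

Section Main.
Import GRing.Theory.
Local Open Scope ring_scope.
Context {K : fieldType} {disp : Order.disp_t} {L : finTBDistrLatticeType disp} (i : int).
Local Notation n := (nvars L).
Local Notation R := {mpoly K[nvars L]}.
Local Notation S := (rank_level i : {set L}).
Local Notation u q := (u_mon L K q).

Lemma coef_sumS (c : L -> R) p m : p \in S -> (mdeg m <= 1)%N ->
  (\sum_(q in S) c q * u q)@_(mq p + m) = (c p)@_m.
Proof.
move=> pS dm; rewrite raddf_sum (bigD1 p) //= u_monE coefMX lepm_addr.
have -> : (mq p + m - mq p = m)%MM by rewrite addmC addmK.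
rewrite big1 ?addr0 // => q /andP[qS qp].
rewrite u_monE coefMX; case: ifP => // h.
by move: qp; rewrite (level_uniq pS qS h dm) eqxx.
Qed.

Lemma coef_sumS0 (c : L -> R) M : mdeg M = #|{: PT L}| ->
  (forall q, q \in S -> M != mq q) -> (\sum_(q in S) c q * u q)@_M = 0.
Proof.
move=> dM hM; rewrite raddf_sum big1 // => q qS.
rewrite /= u_monE coefMX; case: ifP => // h; exfalso.
have : mdeg (M - mq q) = 0%N.
  by move: (congr1 mdeg (submK h)); rewrite mdegD mdeg_mq dM; lia.
move/eqP; rewrite mdeg_eq0 => /eqP e.
by move: (hM q qS); rewrite -(submK h) e add0m eqxx.
Qed.

Lemma mq_inj p q : p \in S -> q \in S -> mq p = mq q -> p = q.
Proof.
move=> pS qS e; apply: (level_uniq (m := 0%MM) pS qS); last by rewrite mdeg0.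
by rewrite addm0 e lepm_refl.
Qed.

Lemma coef_sumC (C : L -> K) M :
  (\sum_(q in S) (C q)%:MP * u q)@_M = \sum_(q in S) C q * (mq q == M)%:R.
Proof. by rewrite raddf_sum; apply: eq_bigr => q _; rewrite /= u_monE coefCX. Qed.

Lemma main_contra : (1 < #|S|)%N -> ~ has_linear_resolution (H_ideal L K S).
Proof.
move=> /card_gt1P [p [q [pS qS pq]]] [d [b [g [A [Hg HA Himg Hker _]]]]].
set N := #|{: PT L}|.
have uI : forall x, x \in S -> H_ideal L K S (u x).
  move=> x xS; exists (fun y => if y == x then 1 else 0).
  rewrite (bigD1 x) //= eqxx mul1r big1 ?addr0 // => y /andP[_ /negbTE ->]; by rewrite mul0r.
have gE : forall (v : 'rV[R]_(b 0%N)), (v *m g) ord0 ord0 = \sum_j v ord0 j * g j ord0.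
  by move=> v; rewrite mxE.
have gI : forall j, H_ideal L K S (g j ord0).
  move=> j; apply/Himg; exists (\row_k ((k == j)%:R : R)).
  rewrite gE (bigD1 j) //= mxE eqxx mul1r big1 ?addr0 // => k /negbTE kj; by rewrite mxE kj mul0r.
have [al Hal] : exists al : 'rV[R]_(b 0%N), u p = (al *m g) ord0 ord0 by apply/Himg/uI.
have [be Hbe] : exists be : 'rV[R]_(b 0%N), u q = (be *m g) ord0 ord0 by apply/Himg/uI.
have dN : d = N.
  have : (u p)@_(mq p) != 0 by rewrite u_monE mcoeffX eqxx oner_eq0.
  rewrite Hal gE => /coefsum_nz [j [_ /coefM_nz [k1 [k2 [E _ nz]]]]].
  have dk2 : mdeg k2 = d by apply/eqP; apply: contraNT nz => h; rewrite (homog0 (Hg j) h).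
  have le1 : (d <= N)%N by move: (congr1 mdeg E); rewrite mdegD mdeg_mq -/N; lia.
  have [c Hc] := gI j.
  move: nz; rewrite Hc => /coefsum_nz [q' [q'S]] /=; rewrite u_monE coefMX.
  case: ifP => [h _|_]; last by rewrite eqxx.
  by move: (mdeg_le h); rewrite mdeg_mq -/N dk2; lia.
have HC0 : forall j, exists Cj : {ffun L -> K},
    g j ord0 = \sum_(q in S) (Cj q)%:MP * u q.
  move=> j; have [c Hc] := gI j.
  exists [ffun q => (c q)@_0]; apply/mpolyP => M.
  rewrite coef_sumC.
  case: (pickP [pred p' | (p' \in S) && (mq p' == M)]) => [p' /andP[p'S /eqP eM] | none].
    rewrite -eM (bigD1 p') //= eqxx mulr1 big1 ?addr0; last first.
      move=> q' /andP[q'S q'p]; case: eqP => [e|_]; last by rewrite mulr0.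
      by move: q'p; rewrite (mq_inj q'S p'S e) eqxx.
    by rewrite Hc -[mq p']addm0 coef_sumS ?mdeg0 // ffunE.
  rewrite big1; last first.
    by move=> q' q'S; have := none q'; rewrite /= q'S /= => ->; rewrite mulr0.
  have [dM|dM] := eqVneq (mdeg M) N.
    rewrite Hc coef_sumS0 // => q' q'S; have := none q'; rewrite /= q'S /= eq_sym.
    by move=> ->.
  by rewrite (homog0 (Hg j)) // dN.
have [C HC] := fin_all_exists HC0.
have G : forall a : 'I_(b 0%N) -> R,
    \sum_j a j * g j ord0 = \sum_(q in S) (\sum_j (C j q)%:MP * a j) * u q.
  move=> a; under eq_bigr do rewrite HC big_distrr.
  rewrite exchange_big /=; apply: eq_bigr => q' _; rewrite big_distrl.
  by apply: eq_bigr => j _ /=; rewrite mulrA [a j * _]mulrC.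
have T0 : forall l, \sum_j (C j p)%:MP * A 0%N l j = 0.
  move=> l.
  have : row l (A 0%N) *m g = 0 by apply/Hker; exists (delta_mx 0 l); rewrite rowE.
  move/matrixP/(_ ord0 ord0); rewrite gE mxE.
  under eq_bigr do rewrite mxE.
  rewrite G => Hs.
  apply/mpolyP => m; rewrite mcoeff0.
  have [dm|dm] := eqVneq (mdeg m) 1%N.
    by move: (congr1 (mcoeff (mq p + m)) Hs); rewrite coef_sumS ?dm // mcoeff0.
  rewrite raddf_sum big1 // => j _; by rewrite /= mcoeffCM (homog0 (HA 0%N l j) dm) mulr0.
set v := u q *: al - u p *: be.
have vg : v *m g = 0.
  apply/matrixP => x y; rewrite !ord1 [RHS]mxE gE.
  rewrite /v; move: (u q) (u p) Hal Hbe => uq up Hal Hbe.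
  under eq_bigr do rewrite !mxE mulrBl -!mulrA.
  by rewrite sumrB -!big_distrr /= -!gE -Hal -Hbe mulrC subrr.
have [w Hw] := (Hker v).1 vg.
have Tw : \sum_j (C j p)%:MP * v ord0 j = 0.
  rewrite Hw; under eq_bigr do rewrite mxE big_distrr.
  rewrite exchange_big big1 // => l _ /=.
  under eq_bigr do rewrite mulrCA.
  by rewrite -big_distrr /= T0; apply: mulr0.

have Tv : (\sum_j (C j p)%:MP * v ord0 j)@_(mq q) = 1.
  under eq_bigr do rewrite !mxE mulrBr [X in X - _]mulrCA [X in _ - X]mulrCA.
  rewrite sumrB -!big_distrr /=.
  set ga := \sum_j _ * al ord0 j.
  set de := \sum_j _ * be ord0 j.
  have ga0 : ga@_0 = 1.
    have := G (fun j => al ord0 j); rewrite -gE -Hal.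
    move/(congr1 (mcoeff (mq p + 0))); rewrite coef_sumS ?mdeg0 // addm0 u_monE mcoeffX eqxx.
    by move=> <-.
  have de0 : de@_0 = 0.
    have := G (fun j => be ord0 j); rewrite -gE -Hbe.
    move/(congr1 (mcoeff (mq p + 0))); rewrite coef_sumS ?mdeg0 // addm0 u_monE mcoeffX.
    move=> <-; case: eqP => [e|]; last by [].
    by move: pq; rewrite (mq_inj qS pS e) eqxx.
  have mm0 : (mq q - mq q = 0)%MM by apply/mnmP => k; rewrite mnmBE subnn mnm0E.
  rewrite mcoeffB !u_monE mulrC coefMX lepm_refl mm0 ga0 mulrC coefMX.
  case: ifP => [h|]; last by rewrite subr0.
  have := level_uniq (m := 0%MM) qS pS; rewrite addm0 mdeg0 => /(_ h isT) e.
  by move: pq; rewrite e eqxx.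
by move: Tv; rewrite Tw mcoeff0 => /esym/eqP; rewrite oner_eq0.
Qed.
End Main.

Theorem corollary3p15 (K : fieldType) (disp : Order.disp_t)
    (L : finTBDistrLatticeType disp) (i : int) :
  (1 < #|(rank_level i : {set L})|)%N ->
  ~ has_linear_resolution (H_ideal L K (rank_level i : {set L})).
Proof. exact: (@main_contra K disp L i). Qed.
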